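(* Let $0<k<n$ be integers such that $s^{n,k}=\frac{n(n+1)}{2k}$ is an even integer. Let $\mathcal P=[p_1,\ldots,p_k]=[2^e,p^f,\ldots]$ be an ascending partition of $n$ of size $k$ with $e,f>0$ and $p\ge 3$; that is, $p_1=\cdots=p_e=2$, $p_{e+1}=\cdots=p_{e+f}=p$, and $p_i>p$ for all $i>e+f$. Let $c=s^{n,k}-n$, $C=\{x\in[n]:x\ge c\}$, $h=|C|-2e=2n-s^{n,k}+1-2e$, $m=s^{n,k}/2$, $\overline h=\lceil h/2\rceil$ and $\underline h=\lfloor h/2\rfloor$. Suppose that \[ m+\sum_{i=c-p+1}^{c-1} i < s^{n,k}, \] and define $g=h-f$ if $f\le \underline h$, and $g=\overline h-2(f-\underline h)$ if $f>\underline h$. If either (i) $g<0$, or (ii) $g\ge 0$ and, for $q=p_{e+f+g+1}$, $\sum_{i=c-q}^{c-1} i<s^{n,k}$, then $\mathcal P$ is non-equitable.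
   Context: $[n]=\{1,2,\ldots,n\}$. An ascending partition of $n$ of size $k$ is a sequence of positive integers $[p_1,\ldots,p_k]$ with $p_1\le\cdots\le p_k$ and $\sum_i p_i=n$. Such a partition is equitable if $[n]$ can be partitioned into sets $A_1,\dots,A_k$ with $|A_i|=p_i$ such that all the sums $\sum_{x\in A_i}x$ are equal (necessarily to $s^{n,k}$). The notation $[q_1^{e_1},q_2^{e_2},\ldots]$ with $q_1<q_2<\cdots$ means the ascending partition having exactly $e_i$ parts equal to $q_i$. *)

(* Defs.v *)
From mathcomp Require Import all_boot all_order all_algebra.
Set Implicit Arguments. Unset Strict Implicit. Unset Printing Implicit Defensive.
Import Order.TTheory GRing.Theory Num.Theory.

(* An ascending partition of n of size k: a sorted (nondecreasing) list of
   k positive integers with sum n.  Entry i (0-based) is p_{i+1}. *)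
Definition asc_partition (n k : nat) (P : seq nat) : Prop :=
  [/\ size P = k, sorted leq P, all (fun x => 0 < x) P & sumn P = n].

(* Equitable: [n] = {1..n} can be partitioned into sets A_1..A_k (given by a
   labelling f : x |-> block index < k) with |A_i| = p_i and all block sums
   equal. *)
Definition equitable (n : nat) (P : seq nat) : Prop :=
  exists f : nat -> nat,
    [/\ forall x, x \in iota 1 n -> f x < size P,
        forall i, i < size P -> count (fun x => f x == i) (iota 1 n) = nth 0 P i
      & forall i j, i < size P -> j < size P ->
          \sum_(x <- iota 1 n | f x == i) x = \sum_(x <- iota 1 n | f x == j) x].

(* s^{n,k} = n(n+1)/(2k) (used only when 2k divides n(n+1)). *)
Definition snk (n k : nat) : nat := (n * n.+1) %/ (2 * k).

Local Open Scope ring_scope.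

Definition isum (a b : int) : int :=
  if a <= b then \sum_(0 <= j < absz (b - a + 1)) (a + j%:Z) else 0.

(* ceiling and floor of h/2 for integers (divz is floor division for d > 0) *)
Definition floor2 (h : int) : int := (h %/ 2)%Z.
Definition ceil2 (h : int) : int := - ((- h) %/ 2)%Z.

(* Main.v *)
Require Import Defs.
From mathcomp Require Import all_boot all_order all_algebra zify.
Import Order.TTheory GRing.Theory Num.Theory.

Lemma sum_iota2 n : 2 * \sum_(x <- iota 1 n) x = n * n.+1.
Proof.
elim: n => [|n IH]; first by rewrite big_nil.
have -> : iota 1 n.+1 = iota 1 n ++ [:: n.+1] by rewrite -[n.+1]addn1 iotaD /= addnC.
rewrite big_cat big_seq1 /= mulnDr IH; lia.
Qed.

Lemma sumn_sum (s : seq nat) : \sum_(x <- s) x = sumn s.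
Proof. by rewrite sumnE. Qed.

Lemma maxsum (c : nat) (B : seq nat) : uniq B -> all (fun x => x < c) B ->
  2 * sumn B + size B * (size B).+1 <= 2 * size B * c.
Proof.
elim: c B => [|c IH] B uB aB.
  by case: B uB aB.
have [inB|ninB] := boolP (c \in B).
  have := perm_to_rem inB => pe.
  rewrite (perm_sumn pe) (perm_size pe) /=.
  have u' : uniq (rem c B) by apply: rem_uniq.
  have a' : all (fun x => x < c) (rem c B).
    apply/allP => x xin.
    have xB : x \in B by apply: (mem_rem xin).
    have /= := allP aB x xB.
    rewrite ltnS leq_eqVlt => /orP [/eqP xc|//].
    by move: xin; rewrite xc mem_rem_uniqF.
  have := IH _ u' a'.
  set q := size (rem c B).
  move=> H; nia.
have a' : all (fun x => x < c) B.
  apply/allP => x xB; have /= := allP aB x xB.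
  rewrite ltnS leq_eqVlt => /orP [/eqP xc|//].
  by move: ninB; rewrite -xc xB.
have := IH _ uB a'; nia.
Qed.

Lemma size_lt (c : nat) (B : seq nat) : uniq B -> all (fun x => x < c) B -> size B <= c.
Proof.
move=> uB aB; rewrite -(size_iota 0 c); apply: uniq_leq_size => // x xB.
by rewrite mem_iota /= add0n (allP aB x xB).
Qed.

Lemma count_ge_iota a n : 0 < a <= n.+1 -> count (fun x => a <= x) (iota 1 n) = n.+1 - a.
Proof.
move=> /andP [a0 an].
have -> : n = a.-1 + (n.+1 - a) by lia.
rewrite iotaD count_cat.
rewrite (eq_in_count (a2 := pred0)); last first.
  by move=> x; rewrite mem_iota /=; lia.
rewrite count_pred0 add0n.
rewrite (eq_in_count (a2 := predT)); last first.
  by move=> x; rewrite mem_iota /=; lia.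
rewrite count_predT size_iota; lia.
Qed.

Local Open Scope ring_scope.

Lemma sum_lin (a : int) (q : nat) :
  2 * \sum_(0 <= j < q) (a + j%:Z) = 2 * q%:Z * a + q%:Z * (q%:Z - 1).
Proof.
elim: q => [|q IH].
  rewrite big_geq //; lia.
rewrite big_nat_recr //= mulrDr IH; lia.
Qed.

Lemma isum_closed (c : int) (q : nat) :
  2 * isum (c - q%:Z) (c - 1) = 2 * q%:Z * c - q%:Z * (q%:Z + 1).
Proof.
rewrite /isum; case: ifP => H.
  have -> : absz (c - 1 - (c - q%:Z) + 1) = q by lia.
  rewrite sum_lin; lia.
have -> : q = 0%N by lia.
lia.
Qed.

Lemma floor_ceil (h : int) : exists F Q r r', floor2 h = F /\ ceil2 h = - Q /\
  h = 2 * F + r' /\ - h = 2 * Q + r /\ 0 <= r < 2 /\ 0 <= r' < 2.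
Proof.
exists (floor2 h), ((- h) %/ 2)%Z, ((- h) %% 2)%Z, (h %% 2)%Z.
rewrite /floor2 /ceil2; split => //; split => //.
split; first by rewrite {1}(divz_eq h 2) mulrC.
split; first by rewrite {1}(divz_eq (-h) 2) mulrC.
by rewrite !modz_ge0 // !ltz_pmod.
Qed.
Local Close Scope ring_scope.

Lemma sum_eq1 (k x : nat) : x < k -> \sum_(i < k) (x == i) = 1.
Proof.
move=> xk; rewrite (bigD1 (Ordinal xk)) //= eqxx big1 // => i /eqP ne.
case: eqP => // xi; exfalso; apply: ne; apply: val_inj => /=; by rewrite xi.
Qed.

Lemma part_count (lab : nat -> nat) k (r : seq nat) (Q : pred nat) :
  (forall x, x \in r -> lab x < k) ->
  \sum_(i < k) count Q (filter (fun x => lab x == i) r) = count Q r.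
Proof.
elim: r => [|x r IH] H; first by rewrite big1.
rewrite /= -IH; last by move=> y yr; apply: H; rewrite inE yr orbT.
have xk : lab x < k by apply: H; rewrite inE eqxx.
transitivity (\sum_(i < k) ((lab x == i) * Q x + count Q (filter (fun x => lab x == i) r))).
  by apply: eq_bigr => i _; case: (lab x == i) => /=; rewrite ?mul1n ?mul0n.
by rewrite big_split /= -big_distrl /= sum_eq1 // mul1n.
Qed.

Lemma part_sum (lab : nat -> nat) k (r : seq nat) :
  (forall x, x \in r -> lab x < k) ->
  \sum_(i < k) sumn (filter (fun x => lab x == i) r) = sumn r.
Proof.
elim: r => [|x r IH] H; first by rewrite big1.
rewrite /= -IH; last by move=> y yr; apply: H; rewrite inE yr orbT.
have xk : lab x < k by apply: H; rewrite inE eqxx.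
transitivity (\sum_(i < k) ((lab x == i) * x + sumn (filter (fun x => lab x == i) r))).
  by apply: eq_bigr => i _; case: (lab x == i) => /=; rewrite ?mul1n ?mul0n.
by rewrite big_split /= -big_distrl /= sum_eq1 // mul1n.
Qed.

Lemma sumn_split (a : pred nat) (B : seq nat) :
  sumn B = sumn (filter a B) + sumn (filter (predC a) B).
Proof.
elim: B => [|x B IH] //=; rewrite IH; case: (a x) => /=; lia.
Qed.

Lemma sumn_le_bound (B : seq nat) M : all (fun x => x <= M) B -> sumn B <= size B * M.
Proof.
elim: B => [|x B IH] //= /andP [xM aB]; rewrite mulSn; have := IH aB; lia.
Qed.

Lemma two_block n M B : uniq B -> all (fun x => 0 < x <= n) B -> size B = 2 ->
  sumn B = 2 * M ->
  [/\ 2 * M < 2 * n, count (fun x => 2 * M - n <= x) B = 2 & count (fun x => M < x) B = 1].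
Proof.
case: B => [|x [|y [|z B]]] //= /andP [xy _] /and3P [/andP [x0 xn] /andP [y0 yn] _] _.
rewrite addn0 => xyM.
have ne : x != y by move: xy; rewrite inE.
have hxy : x <> y by apply/eqP.
split; first by lia.
  have -> : 2 * M - n <= x by lia.
  have -> : 2 * M - n <= y by lia.
  by [].
case: (ltngtP x y) => [lt|gt|eq]; last by lia.
  have -> : (M < x) = false by apply/negbTE; lia.
  have -> : M < y by lia.
  by [].
have -> : M < x by lia.
have -> : (M < y) = false by apply/negbTE; lia.
by [].
Qed.

Lemma p_block n M c0 p B : uniq B -> all (fun x => 0 < x <= n) B -> size B = p ->
  sumn B = 2 * M -> c0 <= M -> 1 <= p ->
  2 * M + 2 * (p - 1) * c0 < 4 * M + (p - 1) * p ->
  2 <= count (fun x => c0 <= x) B + count (fun x => M < x) B /\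
  count (fun x => M < x) B <= count (fun x => c0 <= x) B.
Proof.
move=> uB aB sB sumB c0M p1 Hp.
have sub : count (fun x => M < x) B <= count (fun x => c0 <= x) B.
  by apply: sub_count => x /=; lia.
split => //.
set cC := count (fun x => c0 <= x) B in sub *; set l := count (fun x => M < x) B in sub *.
have [l0|lpos] := posnP l; last by lia.
have [cC2|cC1] := leqP 2 cC; first by lia.
exfalso.
have allM : all (fun x => x <= M) (filter (fun x => c0 <= x) B).
  apply/allP => x; rewrite mem_filter => /andP [_ xB].
  move/eqP: l0; rewrite /l eqn0Ngt -has_count => /hasPn /(_ x xB) /=; lia.
have s1 := sumn_le_bound _ _ allM.
rewrite size_filter -/cC in s1.
have u2 : uniq (filter (predC (fun x => c0 <= x)) B) by apply: filter_uniq.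
have a2 : all (fun x => x < c0) (filter (predC (fun x => c0 <= x)) B).
  by apply/allP => x; rewrite mem_filter /= => /andP [] ; lia.
have s2 := maxsum _ _ u2 a2.
rewrite size_filter in s2.
have cp := count_predC (fun x => c0 <= x) B.
rewrite -/cC sB in cp.
have := sumn_split (fun x => c0 <= x) B; rewrite sumB => e.
set q := count (predC _) B in s2 cp.
case: cC cC1 s1 cp e {sub} => [|[|//]] _ s1 cp e.
  have qp : q = p by lia.
  rewrite qp in s2; nia.
have qp : q = p - 1 by lia.
rewrite qp in s2; nia.
Qed.

Lemma final_block c0 q q' B S : uniq B -> all (fun x => x < c0) B -> size B = q' ->
  sumn B = S -> q' <= q -> q <= c0 -> 2 * q * c0 < 2 * S + q * q.+1 -> False.
Proof.
move=> uB aB sB sumB qq qc H.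
have := maxsum _ _ uB aB; rewrite sB sumB => H2.
have [eq|lt] := eqVneq q' q; first by subst; lia.
have lt' : q' < q by lia.
have [d dq] : exists d, q = q' + d by exists (q - q'); lia.
subst q.
have : d * (2 * q' + d + 1) <= d * (2 * c0) by apply: leq_mul; lia.
nia.
Qed.

Lemma leq_sum_range m n (F G : nat -> nat) :
  (forall i, m <= i < n -> F i <= G i) -> \sum_(m <= i < n) F i <= \sum_(m <= i < n) G i.
Proof. move=> H; rewrite big_nat [X in _ <= X]big_nat; apply: leq_sum => i; exact: H. Qed.

Lemma sum_range_const m n (F : nat -> nat) a :
  (forall i, m <= i < n -> F i = a) -> \sum_(m <= i < n) F i = (n - m) * a.
Proof. move=> H; rewrite (eq_big_nat _ _ H) sum_nat_const_nat. by []. Qed.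

Lemma split3 (F : nat -> nat) a b c d : a <= b -> b <= c -> c <= d ->
  \sum_(a <= i < d) F i = \sum_(a <= i < b) F i + \sum_(b <= i < c) F i + \sum_(c <= i < d) F i.
Proof.
move=> ab bc cd; rewrite (big_cat_nat (n := b)) //=; last by lia.
by rewrite (big_cat_nat bc cd) addnA.
Qed.

Lemma split2 (F : nat -> nat) a b d : a <= b -> b <= d ->
  \sum_(a <= i < d) F i = \sum_(a <= i < b) F i + \sum_(b <= i < d) F i.
Proof. move=> ab bd; by rewrite (big_cat_nat ab bd). Qed.
Local Open Scope ring_scope.

Theorem mainTheorem2 (n k : nat) (P : seq nat) (e f p : nat) :
  (0 < k)%N -> (k < n)%N ->
  (2 * k %| n * n.+1)%N -> ~~ odd (snk n k) ->
  asc_partition n k P ->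
  (0 < e)%N -> (0 < f)%N -> (3 <= p)%N ->
  (forall i, (i < e)%N -> nth 0%N P i = 2%N) ->
  (forall i, (e <= i < e + f)%N -> nth 0%N P i = p) ->
  (forall i, (e + f <= i < k)%N -> (p < nth 0%N P i)%N) ->
  let s : int := (snk n k)%:Z in
  let c : int := s - n%:Z in
  let h : int := (count (fun x : nat => c <= x%:Z) (iota 1 n))%:Z - 2 * e%:Z in
  let m : int := ((snk n k) %/ 2)%N%:Z in
  m + isum (c - p%:Z + 1) (c - 1) < s ->
  let g : int := if f%:Z <= floor2 h then h - f%:Z
                 else ceil2 h - 2 * (f%:Z - floor2 h) in
  (g < 0 \/
   (0 <= g /\ (e + f + absz g < k)%N /\
    let q := nth 0%N P (e + f + absz g) in
    isum (c - q%:Z) (c - 1) < s)) ->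
  ~ equitable n P.
Proof.
move=> k0 kn dvd sev [sP srt pos sumP] e0 f0 p3 H2 Hp Hbig s c h m Hm g Hg.
move: Hm Hg; rewrite /g /h /m /c /s; clear g h m c s.
move: sev; set S := snk n k; set M := (S %/ 2)%N.
move=> sev Hm Hg [lab [Hlab Hcnt Hsum]].
have SM : S = (2 * M)%N.
  by rewrite /M {1}(divn_eq S 2) modn2 (negbTE sev) addn0 mulnC.
have SK : (S * (2 * k) = n * n.+1)%N by rewrite /S /snk divnK.
have efk : (e + f <= k)%N.
  rewrite leqNgt; apply/negP => lt.
  have := Hp (e + f - 1)%N; rewrite nth_default; last by rewrite sP; lia.
  move=> H; have := H ltac:(lia); lia.
pose B i := filter (fun x => lab x == i) (iota 1 n).
have uB i : uniq (B i) by apply: filter_uniq; apply: iota_uniq.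
have aB i : all (fun x => 0 < x <= n)%N (B i).
  apply/allP => x; rewrite mem_filter mem_iota => /andP [_]; lia.
have sB i : (i < k)%N -> size (B i) = nth 0%N P i.
  by move=> ik; rewrite size_filter Hcnt // sP.
have sumBi i : sumn (B i) = \sum_(x <- iota 1 n | lab x == i) x.
  by rewrite sumnE big_filter.
have Hlab' : forall x, x \in iota 1 n -> (lab x < k)%N by move=> x /Hlab; rewrite sP.
have sumB i : (i < k)%N -> sumn (B i) = S.
  move=> ik.
  have eq0 j : (j < k)%N -> sumn (B j) = sumn (B 0%N).
    by move=> jk; rewrite !sumBi; apply: Hsum; rewrite sP.
  have := part_sum lab k (iota 1 n) Hlab'.
  rewrite (eq_bigr (fun _ => sumn (B 0%N))); last by move=> j _; apply: eq0.
  rewrite sum_nat_const card_ord => Hk.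
  have := sum_iota2 n; rewrite -sumnE -Hk -SK => Hk2.
  rewrite eq0 //.
  apply/eqP; rewrite -(eqn_pmul2l (_ : 0 < 2 * k)%N); last by lia.
  apply/eqP; lia.
have two i : (i < e)%N -> [/\ (2 * M < 2 * n)%N, count (fun x => 2 * M - n <= x)%N (B i) = 2%N & count (fun x => M < x)%N (B i) = 1%N].
  move=> ie; apply: two_block => //; first by rewrite sB ?H2 //; lia.
  by rewrite sumB -?SM //; lia.
have [MN _ _] := two 0%N e0.
have sumPn : (\sum_(0 <= i < k) nth 0%N P i)%N = n.
 by rewrite -sumP sumnE [RHS](big_nth 0%N) -sP.
pose Rs := (\sum_(e + f <= i < k) nth 0%N P i)%N.
have nE : n = (2 * e + p * f + Rs)%N.
  rewrite -sumPn (split3 _ 0%N e (e+f) k ltac:(lia) ltac:(lia) efk).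
  rewrite (sum_range_const _ _ _ 2%N); last by move=> i /andP [_ ?]; apply: H2.
  rewrite (sum_range_const _ _ _ p); last by move=> i ?; apply: Hp.
  rewrite /Rs; lia.
have pf3 : (3 * f <= p * f)%N by apply: leq_mul.
have RsG G : (e + f + G < k)%N -> (4 * G + nth 0%N P (e + f + G) <= Rs)%N.
  move=> Gk; rewrite /Rs (split3 _ (e+f)%N (e+f+G)%N (e+f+G).+1 k ltac:(lia) ltac:(lia) Gk).
  rewrite big_nat1.
  have : (\sum_(e + f <= i < e + f + G) 4 <= \sum_(e + f <= i < e + f + G) nth 0%N P i)%N.
    apply: leq_sum_range => i /andP [i1 i2]; have := Hbig i ltac:(lia); lia.
  rewrite sum_nat_const_nat; lia.
move: Hg.
set CC := count (fun x : nat => _ <= _) (iota 1 n).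
have [F [Q [r [r' [FE [QE [hF [hQ [r01 r'01]]]]]]]]] := floor_ceil (CC%:Z - 2 * e%:Z).
rewrite FE QE.
set g := (if _ then _ else _).
have gdef : g = (if f%:Z <= F then CC%:Z - 2 * e%:Z - f%:Z else - Q - 2 * (f%:Z - F)) by [].
clearbody g.
have [SA|SB] := leqP S n.+1.
  have CCn : CC = n.
    rewrite /CC (eq_in_count (a2 := predT)); first by rewrite count_predT size_iota.
    move=> x; rewrite mem_iota => /andP [x1 _] /=; lia.
  case => [gneg|[gpos [Gk Hq]]].
    move: gdef; case: ifP => Hif gdef; lia.
  have := RsG _ Gk.
  have := Hbig (e + f + `|g|)%N ltac:(lia).
  move: gdef; case: ifP => Hif gdef; lia.
have SA' : (n.+2 <= 2 * M)%N by lia.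
set c0 := (2 * M - n)%N in two.
have cc : S%:Z - n%:Z = c0%:Z by rewrite /c0; lia.
have CCe : CC = (n.+1 - c0)%N.
  rewrite /CC -count_ge_iota; last by rewrite /c0; lia.
  apply: eq_count => x /=; rewrite cc; apply/idP/idP; lia.
pose cC i := count (fun x => c0 <= x)%N (B i).
pose cl i := count (fun x => M < x)%N (B i).
have sum_cC : (\sum_(0 <= i < k) cC i)%N = (n.+1 - c0)%N.
  rewrite big_mkord /cC part_count // count_ge_iota //; rewrite /c0; lia.
have sum_cl : (\sum_(0 <= i < k) cl i)%N = (n - M)%N.
  rewrite big_mkord /cl part_count // (count_ge_iota M.+1 n) //; lia.
have Hp' : (2 * M + 2 * (p - 1) * c0 < 4 * M + (p - 1) * p)%N.
  have E1 : S%:Z - n%:Z - p%:Z + 1 = c0%:Z - ((p - 1)%N)%:Z by lia.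
  rewrite E1 cc in Hm.
  have := isum_closed c0%:Z (p - 1)%N.
  have -> : ((p - 1)%N%:Z + 1) = p%:Z by lia.
  rewrite SM in Hm.
  lia.
have pb i : (e <= i < e + f)%N -> (2 <= cC i + cl i)%N /\ (cl i <= cC i)%N.
  move=> ii; apply: (p_block n M c0 p) => //.
  - by rewrite sB ?Hp //; lia.
  - by rewrite sumB -?SM //; lia.
  - by rewrite /c0; lia.
  - by lia.
rewrite (split3 _ 0%N e (e+f) k ltac:(lia) ltac:(lia) efk) in sum_cC.
rewrite (split3 _ 0%N e (e+f) k ltac:(lia) ltac:(lia) efk) in sum_cl.
rewrite (sum_range_const _ _ _ 2%N) in sum_cC; last first.
  by move=> i /andP [_ ie]; rewrite /cC; have [_ -> _] := two i ie.
rewrite (sum_range_const _ _ _ 1%N) in sum_cl; last first.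
  by move=> i /andP [_ ie]; rewrite /cl; have [_ _ ->] := two i ie.
have TL : (\sum_(e <= i < e + f) 2 <= \sum_(e <= i < e + f) (cC i + cl i))%N.
  by apply: leq_sum_range => i /pb [].
rewrite big_split sum_nat_const_nat /= in TL.
have LT : (\sum_(e <= i < e + f) cl i <= \sum_(e <= i < e + f) cC i)%N.
  by apply: leq_sum_range => i /pb [].
move: sum_cC sum_cl TL LT.
set T := (\sum_(e <= i < e + f) cC i)%N.
set R := (\sum_(e + f <= i < k) cC i)%N.
set Lm := (\sum_(e <= i < e + f) cl i)%N.
set Lr := (\sum_(e + f <= i < k) cl i)%N.
move=> sum_cC sum_cl TL LT.
have Rg : R%:Z <= g.
  move: gdef; case: ifP => Hif gdef; rewrite /c0 in sum_cC CCe; lia.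
case => [gneg|[gpos [Gk Hq]]]; first by lia.
set G := `|g|%N in Gk Hq.
have gG : g = G%:Z by rewrite /G; lia.
have GR : (\sum_(e + f <= i < (e + f + G).+1) cC i <= R)%N.
  by rewrite /R (split2 _ (e+f)%N (e+f+G).+1 k ltac:(lia) Gk); lia.
have [j /andP [j1 j2] cj] : exists2 j, (e + f <= j < (e+f+G).+1)%N & cC j = 0%N.
  case: (boolP (has (fun j => cC j == 0%N) (index_iota (e+f) (e+f+G).+1))) => [/hasP [j jin /eqP cj]|/hasPn H].
    by exists j => //; rewrite mem_index_iota in jin.
  exfalso.
  have : (\sum_(e+f <= i < (e+f+G).+1) 1 <= \sum_(e+f <= i < (e+f+G).+1) cC i)%N.
    apply: leq_sum_range => i ii; have := H i; rewrite mem_index_iota ii => /(_ isT); lia.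
  rewrite sum_nat_const_nat; lia.
have aj : all (fun x => x < c0)%N (B j).
  move/eqP: cj; rewrite /cC eqn0Ngt -has_count => /hasPn Hn.
  by apply/allP => x /Hn /=; lia.
set q := nth 0%N P (e + f + G) in Hq.
have qj : (nth 0%N P j <= q)%N.
  apply: (sorted_leq_nth leq_trans leqnn 0%N srt); rewrite ?inE ?sP; lia.
have qR := RsG G Gk.
have qc : (q <= c0)%N.
  move: gdef; case: ifP => Hif gdef; rewrite /c0 in sum_cC CCe |- *; lia.
rewrite cc in Hq.
have := isum_closed c0%:Z q.
move=> Eq.
have Hq' : (2 * q * c0 < 2 * S + q * q.+1)%N by lia.
apply: (final_block c0 q (nth 0%N P j) (B j) S (uB j) aj) => //.
- by apply: sB; lia.
- by apply: sumB; lia.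
Qed.
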